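(* Let $F$ be a Banach lattice and $(f_n)\subset\mathrm{S}_F$ a quasi-disjoint sequence. Then $\overline{\mathrm{span}}\{f_n\}_{n\in\mathbb{N}}$ is anti-dispersed.
   Context: $\mathrm{S}_X$ is the unit sphere. Elements $x,y$ are disjoint if $|x|\wedge|y|=0$. $(f_n)\subset\mathrm{S}_F$ is quasi-disjoint if there is a disjoint sequence $(e_n)\subset\mathrm{S}_F$ with $\sum_n\|f_n-e_n\|<1$. A subspace $E$ is dispersed if it contains no almost disjoint sequence, i.e. no $(e_n)\subset\mathrm{S}_E$ for which there is a disjoint $(g_n)\subset F$ with $\|g_n-e_n\|\to0$. A closed subspace is anti-dispersed if it contains no infinite-dimensional closed dispersed subspace. *)

(* Defs.v *)
From HB Require Import structures.
From mathcomp Require Import all_boot all_order all_algebra.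
From mathcomp Require Import all_classical all_reals all_analysis.
Set Implicit Arguments. Unset Strict Implicit. Unset Printing Implicit Defensive.
Import Order.TTheory GRing.Theory Num.Theory.
Import numFieldNormedType.Exports.
Local Open Scope classical_set_scope.
Local Open Scope ring_scope.

Record BanachLattice (R : realType) (V : completeNormedModType R) := {
  bl_le : V -> V -> Prop;
  bl_join : V -> V -> V;
  bl_meet : V -> V -> V;
  bl_le_refl : forall x, bl_le x x;
  bl_le_anti : forall x y, bl_le x y -> bl_le y x -> x = y;
  bl_le_trans : forall x y z, bl_le x y -> bl_le y z -> bl_le x z;
  bl_le_add : forall x y z, bl_le x y -> bl_le (x + z) (y + z);
  bl_le_scale : forall (a : R) x y, 0 <= a -> bl_le x y -> bl_le (a *: x) (a *: y);
  bl_join_ubl : forall x y, bl_le x (bl_join x y);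
  bl_join_ubr : forall x y, bl_le y (bl_join x y);
  bl_join_lub : forall x y z, bl_le x z -> bl_le y z -> bl_le (bl_join x y) z;
  bl_meet_lbl : forall x y, bl_le (bl_meet x y) x;
  bl_meet_lbr : forall x y, bl_le (bl_meet x y) y;
  bl_meet_glb : forall x y z, bl_le z x -> bl_le z y -> bl_le z (bl_meet x y);
  bl_norm_mono : forall x y, bl_le (bl_join x (- x)) (bl_join y (- y)) ->
                             `|x| <= `|y|
}.
Arguments BanachLattice : clear implicits.

Section BL.
Context {R : realType} {V : completeNormedModType R} (L : BanachLattice R V).

Definition bl_abs (x : V) : V := bl_join L x (- x).

Definition bl_disjoint (x y : V) : Prop := bl_meet L (bl_abs x) (bl_abs y) = 0.

Definition disjoint_seq (g : nat -> V) : Prop :=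
  forall n m, n <> m -> bl_disjoint (g n) (g m).

Definition in_sphere (x : V) : Prop := `|x| = 1.

Definition quasi_disjoint (f : nat -> V) : Prop :=
  (forall n, in_sphere (f n)) /\
  exists e : nat -> V, (forall n, in_sphere (e n)) /\ disjoint_seq e /\
    ((\sum_(n <oo) (`|f n - e n|)%:E) < 1%:E)%E.

Definition closed_subspace (E : set V) : Prop :=
  E 0 /\ (forall x y, E x -> E y -> E (x + y)) /\
  (forall (a : R) x, E x -> E (a *: x)) /\ closed E.

Definition fin_span (s : seq V) : set V :=
  [set x | exists c : nat -> R, x = \sum_(i < size s) c i *: s`_i].

Definition infinite_dimensional (E : set V) : Prop :=
  forall s : seq V, ~ (E `<=` fin_span s).

Definition almost_disjoint_in (E : set V) (e : nat -> V) : Prop :=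
  (forall n, E (e n) /\ in_sphere (e n)) /\
  exists g : nat -> V, disjoint_seq g /\
    ((fun n => `|g n - e n|) @ \oo --> (0 : R)).

Definition dispersed (E : set V) : Prop :=
  ~ exists e : nat -> V, almost_disjoint_in E e.

Definition anti_dispersed (Y : set V) : Prop :=
  closed_subspace Y /\
  ~ exists Z : set V, [/\ Z `<=` Y, closed_subspace Z,
                          infinite_dimensional Z & dispersed Z].

Definition closed_span (f : nat -> V) : set V :=
  closure [set x | exists (n : nat) (c : nat -> R), x = \sum_(i < n) c i *: f i].

End BL.

(* Main.v *)
Require Import Defs.
From HB Require Import structures.
From mathcomp Require Import all_boot all_order all_algebra.
From mathcomp Require Import all_classical all_reals all_analysis.
From mathcomp Require Import ring lra.
Set Implicit Arguments. Unset Strict Implicit. Unset Printing Implicit Defensive.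
Import Order.TTheory GRing.Theory Num.Theory.
Import numFieldNormedType.Exports.
Local Open Scope classical_set_scope.
Local Open Scope ring_scope.


Section Lat.
Context {R : realType} {V : completeNormedModType R} (L : BanachLattice R V).
Local Notation le := (bl_le L).
Local Notation jn := (bl_join L).
Local Notation mt := (bl_meet L).
Local Notation ab := (bl_abs L).

Lemma leR x : le x x. Proof. exact: bl_le_refl. Qed.
Lemma leT y x z : le x y -> le y z -> le x z. Proof. exact: bl_le_trans. Qed.
Lemma leA x y : le x y -> le y x -> x = y. Proof. exact: bl_le_anti. Qed.
Lemma leDr z x y : le x y -> le (x + z) (y + z). Proof. exact: bl_le_add. Qed.
Lemma leDl z x y : le x y -> le (z + x) (z + y).
Proof. by move=> h; rewrite ![z + _]addrC; apply: leDr. Qed.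
Lemma leD a b c d : le a b -> le c d -> le (a + c) (b + d).
Proof. by move=> h1 h2; apply: (leT (leDr c h1)); apply: leDl. Qed.
Lemma leN x y : le x y -> le (- y) (- x).
Proof.
move=> h; have := leDr (- x - y) h.
by rewrite addrA subrr add0r addrCA subrr addr0.
Qed.
Lemma leNE x y : le (- y) (- x) -> le x y.
Proof. by move/leN; rewrite !opprK. Qed.
Lemma le_sub x y : le x y -> le 0 (y - x).
Proof. by move=> h; have := leDr (- x) h; rewrite subrr. Qed.
Lemma le_subE x y : le 0 (y - x) -> le x y.
Proof. by move=> h; have := leDr x h; rewrite add0r subrK. Qed.
Lemma le_subr x z w : le (x + z) w -> le x (w - z).
Proof. by move=> h; have := leDr (- z) h; rewrite addrK. Qed.
Lemma le_subl x z w : le w (x + z) -> le (w - z) x.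
Proof. by move=> h; have := leDr (- z) h; rewrite addrK. Qed.
Lemma leZ (a : R) x y : 0 <= a -> le x y -> le (a *: x) (a *: y).
Proof. exact: bl_le_scale. Qed.

Lemma jn_ubl x y : le x (jn x y). Proof. exact: bl_join_ubl. Qed.
Lemma jn_ubr x y : le y (jn x y). Proof. exact: bl_join_ubr. Qed.
Lemma jn_lub x y z : le x z -> le y z -> le (jn x y) z. Proof. exact: bl_join_lub. Qed.
Lemma mt_lbl x y : le (mt x y) x. Proof. exact: bl_meet_lbl. Qed.
Lemma mt_lbr x y : le (mt x y) y. Proof. exact: bl_meet_lbr. Qed.
Lemma mt_glb x y z : le z x -> le z y -> le z (mt x y). Proof. exact: bl_meet_glb. Qed.

Hint Resolve leR jn_ubl jn_ubr mt_lbl mt_lbr : core.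

Lemma jnC x y : jn x y = jn y x.
Proof. by apply: leA; apply: jn_lub; by []. Qed.
Lemma mtC x y : mt x y = mt y x.
Proof. by apply: leA; apply: mt_glb; by []. Qed.
Lemma jn_id x y : le y x -> jn x y = x.
Proof. by move=> h; apply: leA; [apply: jn_lub; [apply: leR|]|apply: jn_ubl]. Qed.
Lemma mt_id x y : le x y -> mt x y = x.
Proof. by move=> h; apply: leA; [apply: mt_lbl|apply: mt_glb; [apply: leR|]]. Qed.
Lemma jn_mono a b c d : le a b -> le c d -> le (jn a c) (jn b d).
Proof. by move=> h1 h2; apply: jn_lub; [apply: leT h1 (jn_ubl _ _)|apply: leT h2 (jn_ubr _ _)]. Qed.
Lemma mt_mono a b c d : le a b -> le c d -> le (mt a c) (mt b d).
Proof. by move=> h1 h2; apply: mt_glb; [apply: leT (mt_lbl _ _) h1|apply: leT (mt_lbr _ _) h2]. Qed.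

Lemma jnD x y z : jn x y + z = jn (x + z) (y + z).
Proof.
apply: leA; last by apply: jn_lub; apply: leDr; by [].
have h : le (jn x y) (jn (x + z) (y + z) - z).
  by apply: jn_lub; apply: le_subr.
by have := leDr z h; rewrite subrK.
Qed.
Lemma mtD x y z : mt x y + z = mt (x + z) (y + z).
Proof.
apply: leA; first by apply: mt_glb; apply: leDr; by [].
have h : le (mt (x + z) (y + z) - z) (mt x y).
  by apply: mt_glb; apply: le_subl.
by have := leDr z h; rewrite subrK.
Qed.
Lemma jnN x y : - jn x y = mt (- x) (- y).
Proof.
apply: leA.
  by apply: mt_glb; apply: leN; by [].
apply: leNE; rewrite opprK; apply: jn_lub; apply: leNE; rewrite opprK;
  by [].
Qed.
Lemma mtN x y : - mt x y = jn (- x) (- y).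
Proof. by rewrite -[x]opprK -[y]opprK -jnN !opprK. Qed.
Lemma jn_mt x y : jn x y + mt x y = x + y.
Proof.
have -> : mt x y = x + y - jn x y.
  by rewrite jnN addrC mtD addKr addrCA addNr addr0 mtC.
by rewrite addrC subrK.
Qed.

Lemma jnZ (c : R) x y : 0 <= c -> c *: jn x y = jn (c *: x) (c *: y).
Proof.
rewrite le0r => /orP[/eqP->|c0]; first by rewrite !scale0r jn_id.
apply: leA; last by apply: jn_lub; apply: leZ; rewrite ?ltW.
have h : le (jn x y) (c^-1 *: jn (c *: x) (c *: y)).
  apply: jn_lub.
    by rewrite -[x in le x _](scale1r) -(mulVf (lt0r_neq0 c0)) -scalerA;
      apply: leZ; rewrite ?invr_ge0 ?ltW.
  by rewrite -[y in le y _](scale1r) -(mulVf (lt0r_neq0 c0)) -scalerA;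
    apply: leZ; rewrite ?invr_ge0 ?ltW.
by have := leZ (ltW c0) h; rewrite scalerA divff ?lt0r_neq0 // scale1r.
Qed.

Lemma mtE x y : mt x y = - jn (- x) (- y).
Proof. by rewrite jnN !opprK. Qed.

Lemma mtZ (c : R) x y : 0 <= c -> c *: mt x y = mt (c *: x) (c *: y).
Proof. by move=> c0; rewrite !mtE scalerN jnZ // !scalerN. Qed.

Lemma le_addl w z x : le (w - z) x -> le w (x + z).
Proof. by move=> h; have := leDr z h; rewrite subrK. Qed.

Lemma ab_ge0 x : le 0 (ab x).
Proof.
have h : le 0 (ab x + ab x).
  by rewrite -(subrr x); apply: leD; [apply: jn_ubl|apply: jn_ubr].
have := leZ (x := 0) (y := ab x + ab x) (a := 2^-1) _ h.
rewrite scaler0 scalerDr -scalerDl.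
have -> : (2^-1 : R) + 2^-1 = 1 by field.
by rewrite scale1r; apply; rewrite invr_ge0.
Qed.
Hint Resolve ab_ge0 : core.
Lemma ab_ub x : le x (ab x). Proof. exact: jn_ubl. Qed.
Lemma ab_ubN x : le (- x) (ab x). Proof. exact: jn_ubr. Qed.
Hint Resolve ab_ub ab_ubN : core.

Lemma abN x : ab (- x) = ab x.
Proof. by rewrite /bl_abs opprK jnC. Qed.

Lemma ab_id x : le 0 x -> ab x = x.
Proof.
move=> h; have h' := leN h; rewrite oppr0 in h'; apply: jn_id; exact: leT h' h.
Qed.

Lemma ab0 : ab 0 = 0.
Proof. exact: ab_id. Qed.

Lemma abZ (c : R) x : ab (c *: x) = `|c| *: ab x.
Proof.
have pos_case (d : R) y : 0 <= d -> ab (d *: y) = d *: ab y.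
  by move=> d0; rewrite /bl_abs jnZ // scalerN.
have [c0|c0] := leP 0 c; first by rewrite ger0_norm // pos_case.
have -> : c *: x = (- c) *: (- x) by rewrite scaleNr scalerN opprK.
by rewrite pos_case ?abN ?ltr0_norm // oppr_ge0 ltW.
Qed.

Lemma ab_tri x y : le (ab (x + y)) (ab x + ab y).
Proof.
apply: jn_lub; first by apply: leD.
by rewrite opprD; apply: leD.
Qed.

Lemma mt0 u : le 0 u -> mt u 0 = 0.
Proof. by move=> h; apply: leA => //; apply: mt_glb. Qed.

Lemma mt_ge0 u v : le 0 u -> le 0 v -> le 0 (mt u v).
Proof. by move=> hu hv; apply: mt_glb. Qed.

Lemma subadd u v w : le 0 u -> le 0 v -> le 0 w ->
  le (mt u (v + w)) (mt u v + mt u w).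
Proof.
move=> hu hv hw; set t := mt u (v + w).
rewrite [mt u v + _]addrC; apply: le_addl; rewrite mtN addrC jnD; apply: jn_lub.
  apply: (@leT 0); last exact: mt_ge0.
  by rewrite -(addNr u); apply: leDl; exact: mt_lbl.
apply: mt_glb.
  apply: (@leT t); last exact: mt_lbl.
  have hv' := leN hv; rewrite oppr0 in hv'.
  by have := leDr t hv'; rewrite add0r.
by rewrite -(addKr v w); apply: leDl; apply: mt_lbr.
Qed.

Lemma sum_ge0 (p : nat -> V) n : (forall i, (i < n)%N -> le 0 (p i)) ->
  le 0 (\sum_(i < n) p i).
Proof.
elim: n => [|n IH] h; first by rewrite big_ord0.
have h1 : le 0 (\sum_(i<n) p i) by apply: IH => i hi; apply: h; rewrite ltnS ltnW.
by rewrite big_ord_recr /=; have := leD h1 (h n (ltnSn n)); rewrite addr0.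
Qed.

Lemma disj_sum (p : nat -> V) q n : le 0 q ->
  (forall i, (i < n)%N -> le 0 (p i) /\ mt (p i) q = 0) ->
  mt (\sum_(i < n) p i) q = 0.
Proof.
move=> hq; elim: n => [|n IH] h.
  by rewrite big_ord0 mtC mt0.
have hp : forall i, (i < n)%N -> le 0 (p i) /\ mt (p i) q = 0.
  by move=> i hi; apply: h; rewrite ltnS ltnW.
have hs : le 0 (\sum_(i < n) p i) by apply: sum_ge0 => i /hp [].
have [hpn hpq] := h n (ltnSn n).
rewrite big_ord_recr /=; apply: leA; last first.
  by apply: mt_ge0 => //; have := leD hs hpn; rewrite addr0.
rewrite mtC; apply: leT (subadd hq hs hpn) _.
by rewrite mtC IH // mtC hpq addr0.
Qed.

Definition blpos x := jn x 0.
Definition blneg x := jn (- x) 0.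

Lemma pos_ge0 x : le 0 (blpos x). Proof. exact: jn_ubr. Qed.
Lemma neg_ge0 x : le 0 (blneg x). Proof. exact: jn_ubr. Qed.
Lemma pos_le_ab x : le (blpos x) (ab x). Proof. by apply: jn_lub. Qed.
Lemma neg_le_ab x : le (blneg x) (ab x).
Proof. by apply: jn_lub => //; apply: jn_ubr. Qed.

Hint Resolve pos_ge0 neg_ge0 pos_le_ab neg_le_ab : core.
Lemma pos_sub_neg x : blpos x - blneg x = x.
Proof. by rewrite /blpos /blneg jnN opprK oppr0 jn_mt addr0. Qed.

Lemma ab_posneg x : ab x = blpos x + blneg x.
Proof.
have e1 : x + blneg x = jn 0 x by rewrite /blneg addrC jnD addNr add0r.
rewrite /blpos jnD add0r e1.
apply: leA.
  apply: jn_lub; first by apply: leT (jn_ubr 0 x) (jn_ubl _ _).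
  exact: (leT (jn_ubl (- x) 0) (jn_ubr _ _)).
apply: jn_lub; last by apply: jn_lub => //; apply: jn_ubr.
by apply: jn_lub.
Qed.

Lemma pos_sub p n : le 0 p -> le 0 n -> mt p n = 0 -> blpos (p - n) = p.
Proof.
move=> hp hn h; rewrite /blpos.
transitivity (jn (- n + p) (- p + p)); first by rewrite addNr addrC.
by rewrite -jnD -mtN mtC h oppr0 add0r.
Qed.

Lemma pos_neg_mt x : mt (blpos x) (blneg x) = 0.
Proof.
have -> : blneg x = - x + blpos x by rewrite -[X in - X](pos_sub_neg x) opprB subrK.
by rewrite -[X in mt X _]add0r -mtD mtE oppr0 opprK jnC addNr.
Qed.

Lemma mt_small a a' b b' : le 0 a -> le a a' -> le 0 b -> le b b' ->
  mt a' b' = 0 -> mt a b = 0.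
Proof.
move=> ha haa hb hbb h; apply: leA; last exact: mt_ge0.
by rewrite -h; apply: mt_mono.
Qed.

Lemma disj2 a b q : le 0 a -> le 0 b -> le 0 q -> mt a q = 0 -> mt b q = 0 ->
  mt (a + b) q = 0.
Proof.
move=> ha hb hq h1 h2; apply: leA; last by apply: mt_ge0 => //;
  have := leD ha hb; rewrite addr0.
by rewrite mtC; apply: leT (subadd hq ha hb) _; rewrite mtC h1 mtC h2 addr0.
Qed.

Lemma ab_disjD x y : bl_disjoint L x y -> ab (x + y) = ab x + ab y.
Proof.
rewrite /bl_disjoint => hxy.
have s1 a b : le a (ab x) -> le b (ab y) -> le 0 a -> le 0 b -> mt a b = 0.
  by move=> h1 h2 h3 h4; apply: mt_small hxy.
have s2 a b : le a (ab y) -> le b (ab x) -> le 0 a -> le 0 b -> mt a b = 0.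
  by move=> h1 h2 h3 h4; rewrite mtC; apply: s1.
have hpx : le 0 (blpos x) := pos_ge0 x. have hnx : le 0 (blneg x) := neg_ge0 x.
have hpy : le 0 (blpos y) := pos_ge0 y. have hny : le 0 (blneg y) := neg_ge0 y.
have hp : le 0 ((blpos x) + (blpos y)) by have := leD hpx hpy; rewrite addr0.
have hn : le 0 ((blneg x) + (blneg y)) by have := leD hnx hny; rewrite addr0.
have hpn : mt ((blpos x) + (blpos y)) ((blneg x) + (blneg y)) = 0.
  apply: disj2 => //.
    rewrite mtC; apply: disj2 => //; rewrite mtC ?pos_neg_mt //.
    by apply: s1.
  rewrite mtC; apply: disj2 => //; rewrite mtC ?pos_neg_mt //.
  by apply: s2.
have exy : x + y = ((blpos x) + (blpos y)) - ((blneg x) + (blneg y)).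
  by rewrite -{1}(pos_sub_neg x) -{1}(pos_sub_neg y) opprD addrACA.
have e1 : blpos (x + y) = (blpos x) + (blpos y) by rewrite exy pos_sub.
have e2 : blneg (x + y) = (blneg x) + (blneg y).
  by rewrite /blneg exy opprB; apply: (pos_sub hn hp); rewrite mtC.
rewrite ab_posneg e1 e2 (ab_posneg x) (ab_posneg y).
by rewrite addrACA.
Qed.

Lemma ab_disj_le x y : bl_disjoint L x y -> le (ab x) (ab (x + y)).
Proof. by move=> h; rewrite ab_disjD //; have := leDl (ab x) (ab_ge0 y); rewrite addr0. Qed.

Lemma ab_sum (x : nat -> V) n : le (ab (\sum_(i < n) x i)) (\sum_(i < n) ab (x i)).
Proof.
elim: n => [|n IH]; first by rewrite !big_ord0 ab0.
rewrite !big_ord_recr /=; apply: leT (ab_tri _ _) _; exact: leD.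
Qed.

Lemma mt_scale0 u v (a b : R) : le 0 u -> le 0 v -> mt u v = 0 -> 0 <= a -> 0 <= b ->
  mt (a *: u) (b *: v) = 0.
Proof.
move=> hu hv h ha hb; set m := a + b + 1.
have hm : 0 <= m by rewrite /m; lra.
have sc c w : le 0 w -> 0 <= c -> c <= m -> le (c *: w) (m *: w).
  move=> hw hc hcm; apply: le_subE; rewrite -scalerBl.
  by have := leZ (x := 0) (y := w) (a := m - c) _ hw; rewrite scaler0; apply; lra.
apply: (mt_small (a' := m *: u) (b' := m *: v)).
- by have := leZ (x := 0) (y := u) ha hu; rewrite scaler0.
- by apply: sc => //; rewrite /m; lra.
- by have := leZ (x := 0) (y := v) hb hv; rewrite scaler0.
- by apply: sc => //; rewrite /m; lra.
by rewrite -mtZ // h scaler0.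
Qed.

Lemma disj_combo (e : nat -> V) : disjoint_seq L e -> forall n (a b : nat -> R),
  (forall i, a i = 0 \/ b i = 0) ->
  bl_disjoint L (\sum_(i < n) a i *: e i) (\sum_(i < n) b i *: e i).
Proof.
move=> He n a b hab; rewrite /bl_disjoint.
have hP (c : nat -> R) : le 0 (\sum_(i < n) `|c i| *: ab (e i)).
  apply: (sum_ge0 (p := fun i => `|c i| *: ab (e i))) => i _.
  by have := leZ (x := 0) (y := ab (e i)) (normr_ge0 (c i)) (ab_ge0 _); rewrite scaler0.
have hAB (c : nat -> R) : le (ab (\sum_(i < n) c i *: e i)) (\sum_(i < n) `|c i| *: ab (e i)).
  apply: leT (ab_sum (fun i => c i *: e i) n) _; under eq_bigr do rewrite abZ; exact: leR.
apply: (mt_small (a' := \sum_(i < n) `|a i| *: ab (e i)) (b' := \sum_(i < n) `|b i| *: ab (e i))) => //.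
apply: (disj_sum (p := fun i => `|a i| *: ab (e i))) => // i _; split.
  by have := leZ (x := 0) (y := ab (e i)) (normr_ge0 (a i)) (ab_ge0 _); rewrite scaler0.
rewrite mtC; apply: (disj_sum (p := fun i => `|b i| *: ab (e i))).
  by have := leZ (x := 0) (y := ab (e i)) (normr_ge0 (a i)) (ab_ge0 _); rewrite scaler0.
move=> j _; split.
  by have := leZ (x := 0) (y := ab (e j)) (normr_ge0 (b j)) (ab_ge0 _); rewrite scaler0.
have pz (c : R) k : le 0 (`|c| *: ab (e k)).
  by have := leZ (x := 0) (y := ab (e k)) (normr_ge0 c) (ab_ge0 _); rewrite scaler0.
have [->|hij] := eqVneq j i.
  case: (hab i) => ->; rewrite normr0 scale0r; first exact: mt0 (pz _ _).
  by rewrite mtC; exact: mt0 (pz _ _).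
apply: mt_scale0 => //; apply: He; exact/eqP.
Qed.

Lemma sum_single (e : nat -> V) (c : R) n j : (j < n)%N ->
  \sum_(i < n) (if (i : nat) == j then c else 0) *: e i = c *: e j.
Proof.
move=> hj; rewrite (bigD1 (Ordinal hj)) //= eqxx big1 ?addr0 // => i hi.
rewrite ifF ?scale0r //; apply/negbTE; apply: contra hi => /eqP h.
by apply/eqP/val_inj.
Qed.

Lemma coef_le (e : nat -> V) : disjoint_seq L e -> (forall n, in_sphere (e n)) ->
  forall n (a : nat -> R) j, (j < n)%N -> `|a j| <= `|\sum_(i < n) a i *: e i|.
Proof.
move=> He Hs n a j hj.
set b := fun i : nat => if i == j then a j else 0.
set c := fun i : nat => if i == j then 0 else a i.
have hsplit : \sum_(i < n) a i *: e i =
    \sum_(i < n) b i *: e i + \sum_(i < n) c i *: e i.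
  rewrite -big_split /=; apply: eq_bigr => i _; rewrite -scalerDl /b /c.
  by case: eqP => [->|]; rewrite ?addr0 ?add0r.
have hb : \sum_(i < n) b i *: e i = a j *: e j by rewrite /b sum_single.
have hd : bl_disjoint L (\sum_(i < n) b i *: e i) (\sum_(i < n) c i *: e i).
  by apply: disj_combo => // i; rewrite /b /c; case: eqP; [right|left].
have := bl_norm_mono (ab_disj_le hd); rewrite -hsplit hb normrZ.
by rewrite (Hs j) mulr1.
Qed.
End Lat.


Section Main.
Context {R : realType} {V : completeNormedModType R} (L : BanachLattice R V) (f e : nat -> V).
Context (Hf : forall n, `|f n| = 1) (He1 : forall n, `|e n| = 1) (He : disjoint_seq L e).
Context (dl : R) (hdl : dl < 1) (hs : forall K, \sum_(i < K) `|f i - e i| <= dl).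

Definition sm (h : nat -> V) K (a : nat -> R) := \sum_(i < K) a i *: h i.
Definition cf K (a : nat -> R) j := if (j < K)%N then a j else 0.
Definition Lc := (1 - dl)^-1.

Lemma dl_ge0 : 0 <= dl.
Proof. by have := hs 0; rewrite big_ord0. Qed.

Lemma Lc_gt0 : 0 < Lc.
Proof. by rewrite /Lc invr_gt0 subr_gt0. Qed.

Lemma sm_pad h K M a : (K <= M)%N -> sm h K a = sm h M (cf K a).
Proof.
move=> hKM; rewrite /sm /cf (big_ord_widen M (fun i => a i *: h i) hKM) big_mkcond.
by apply: eq_bigr => i _; case: ifP; rewrite ?scale0r.
Qed.

Lemma cf_pad K M a j : (K <= M)%N -> cf M (cf K a) j = cf K a j.
Proof.
move=> hKM; rewrite /cf; case: ifP => // hj; case: ifP => // hjK.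
by move: hj; rewrite (leq_trans hjK hKM).
Qed.

Lemma smB h K a b : sm h K (fun i => a i - b i) = sm h K a - sm h K b.
Proof. by rewrite /sm -sumrB; apply: eq_bigr => i _; rewrite scalerBl. Qed.

Lemma smD h K a b (c : R) : sm h K (fun i => a i + c * b i) = sm h K a + c *: sm h K b.
Proof.
rewrite /sm scaler_sumr -big_split; apply: eq_bigr => i _.
by rewrite scalerDl scalerA.
Qed.

Lemma MI K a j : `|cf K a j| <= Lc * `|sm f K a|.
Proof.
rewrite /cf; case: ifP => hj; last by rewrite normr0; apply: mulr_ge0 => //; exact: ltW Lc_gt0.
set x := sm f K a; set y := sm e K a.
have hc i : (i < K)%N -> `|a i| <= `|y| by move=> hi; exact: (coef_le He He1 a hi).
have h1 : `|x - y| <= `|y| * dl.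
  rewrite /x /y /sm -sumrB.
  under eq_bigr do rewrite -scalerBr.
  apply: le_trans (ler_norm_sum _ _ _) _.
  apply: (@le_trans _ _ (\sum_(i < K) `|y| * `|f i - e i|)).
    by apply: ler_sum => i _; rewrite normrZ ler_wpM2r // hc.
  by rewrite -mulr_sumr ler_wpM2l.
have h2 : `|y| <= `|x| + `|y| * dl.
  have -> : y = x - (x - y) by rewrite opprB addrCA subrr addr0.
  have := ler_normB x (x - y); rewrite opprB addrCA subrr addr0 => h.
  by apply: le_trans h _; rewrite lerD2l.
have h3 : `|y| <= Lc * `|x|.
  have hd : 0 < 1 - dl by rewrite subr_gt0.
  rewrite /Lc mulrC ler_pdivlMr // mulrBr mulr1; lra.
exact: le_trans (hc _ hj) h3.
Qed.

Lemma MI2 K a K' a' j : `|cf K a j - cf K' a' j| <= Lc * `|sm f K a - sm f K' a'|.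
Proof.
set M := maxn K K'.
have hK : (K <= M)%N by rewrite leq_maxl.
have hK' : (K' <= M)%N by rewrite leq_maxr.
have := MI M (fun i => cf K a i - cf K' a' i) j.
rewrite smB -!sm_pad //.
suff -> : cf M (fun i => cf K a i - cf K' a' i) j = cf K a j - cf K' a' j by [].
rewrite /cf; case: ifP => // hj.
move/negbT: hj; rewrite -leqNgt => hj.
by rewrite !ifF ?subrr //; apply/negbTE; rewrite -leqNgt; exact: leq_trans hj.
Qed.

Definition Gset j z := [set r : R | exists K a, r = cf K a j - Lc * `|z - sm f K a|].
Definition G j z := sup (Gset j z).

Lemma Gset_ub j z r : Gset j z r -> r <= Lc * `|z|.
Proof.
move=> [K [a ->]].
have h1 := le_trans (ler_norm _) (MI K a j).
have h2 : `|sm f K a| <= `|z| + `|z - sm f K a|.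
  have := ler_normB z (z - sm f K a); by rewrite opprB addrCA subrr addr0.
have hL := Lc_gt0.
have h3 : Lc * `|sm f K a| <= Lc * `|z| + Lc * `|z - sm f K a|.
  by rewrite -mulrDr ler_wpM2l // ltW.
lra.
Qed.

Lemma Gset_sup j z : has_sup (Gset j z).
Proof.
split; first by exists (cf 0 (fun=> 0) j - Lc * `|z - sm f 0 (fun=> 0)|); exists 0%N, (fun=> 0).
by exists (Lc * `|z|) => r; exact: Gset_ub.
Qed.

Lemma G_ge j z K a : cf K a j - Lc * `|z - sm f K a| <= G j z.
Proof. by apply: ub_le_sup; [case: (Gset_sup j z)|exists K, a]. Qed.

Lemma Glip1 j z w : G j z <= G j w + Lc * `|z - w|.
Proof.
apply: ge_sup; first by case: (Gset_sup j z).
move=> r [K [a ->]].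
have h1 := G_ge j w K a.
have h2 : `|w - sm f K a| <= `|w - z| + `|z - sm f K a|.
  by have := ler_normD (w - z) (z - sm f K a); rewrite addrA subrK.
have hL := Lc_gt0.
have h3 : Lc * `|w - sm f K a| <= Lc * `|w - z| + Lc * `|z - sm f K a|.
  by rewrite -mulrDr ler_wpM2l // ltW.
rewrite [`|w - z|]distrC in h3; lra.
Qed.

Lemma Glip j z w : `|G j z - G j w| <= Lc * `|z - w|.
Proof.
have h1 := Glip1 j z w; have h2 := Glip1 j w z; rewrite distrC in h2.
rewrite ler_norml; apply/andP; split; lra.
Qed.

Lemma Gsm j K a : G j (sm f K a) = cf K a j.
Proof.
apply/eqP; rewrite eq_le; apply/andP; split; last first.
  by have := G_ge j (sm f K a) K a; rewrite subrr normr0 mulr0 subr0.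
apply: ge_sup; first by case: (Gset_sup j (sm f K a)).
move=> r [K' [a' ->]].
have := MI2 K' a' K a j; rewrite [`|sm f K' a' - _|]distrC => h.
have := le_trans (ler_norm _) h; lra.
Qed.

Lemma Gsm_lin j K a K' b (c : R) :
  G j (sm f K a + c *: sm f K' b) = G j (sm f K a) + c * G j (sm f K' b).
Proof.
set M := maxn K K'.
have hK : (K <= M)%N by rewrite leq_maxl.
have hK' : (K' <= M)%N by rewrite leq_maxr.
rewrite (sm_pad _ _ hK) (sm_pad _ _ hK') -smD !Gsm.
rewrite /cf; case: ifP => // hj.
by rewrite mulr0 addr0.
Qed.

Lemma clP z : closed_span f z -> forall eps, 0 < eps -> exists K a, `|z - sm f K a| < eps.
Proof.
move=> hz eps e0; have [x [[n [c ->]] bx]] := hz _ (nbhsx_ballx z eps e0).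
by exists n, c; move: bx; rewrite -ball_normE.
Qed.

Lemma clI z : (forall eps, 0 < eps -> exists K a, `|z - sm f K a| < eps) -> closed_span f z.
Proof.
move=> h B /nbhs_ballP [eps /= e0 sub].
have [K [a ha]] := h eps e0.
exists (sm f K a); split; first by exists K, a.
by apply: sub; rewrite -ball_normE.
Qed.

Lemma sm_cl K a : closed_span f (sm f K a).
Proof. by apply: subset_closure; exists K, a. Qed.

Lemma Glin j z w c : closed_span f z -> closed_span f w ->
  G j (z + c *: w) = G j z + c * G j w.
Proof.
move=> hz hw.
set t := G j (z + c *: w) - (G j z + c * G j w).
suff : `|t| <= 0 by rewrite normr_le0 subr_eq0 => /eqP.
apply/ler_addgt0Pr => eps e0; rewrite add0r.
have hL := Lc_gt0.
set m := 2 * Lc * (1 + `|c|).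
have m0 : 0 < m by rewrite /m !mulr_gt0 // ltr_pwDl.
set eta := eps / m.
have eta0 : 0 < eta by rewrite divr_gt0.
have [K [a ha]] := clP hz eta0.
have [K' [b hb]] := clP hw eta0.
have e1 := Glip j (z + c *: w) (sm f K a + c *: sm f K' b).
have e2 := Glip j z (sm f K a).
have e3 := Glip j w (sm f K' b).
rewrite Gsm_lin in e1.
have d1 : `|z + c *: w - (sm f K a + c *: sm f K' b)| <= eta + `|c| * eta.
  have -> : z + c *: w - (sm f K a + c *: sm f K' b) = (z - sm f K a) + c *: (w - sm f K' b).
    by rewrite scalerBr opprD addrACA.
  apply: le_trans (ler_normD _ _) _; rewrite normrZ; apply: lerD; first exact: ltW.
  by rewrite ler_wpM2l // ltW.
have t_eq : t = (G j (z + c *: w) - (G j (sm f K a) + c * G j (sm f K' b)))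
   - (G j z - G j (sm f K a)) - c * (G j w - G j (sm f K' b)).
  by rewrite /t; ring.
rewrite t_eq.
apply: le_trans (ler_normB _ _) _.
apply: le_trans (lerD (ler_normB _ _) (lexx _)) _.
rewrite normrM.
have c0 := normr_ge0 c.
have f1 : Lc * `|z + c *: w - (sm f K a + c *: sm f K' b)| <= Lc * (eta + `|c| * eta).
  by rewrite ler_wpM2l // ltW.
have f2 : Lc * `|z - sm f K a| <= Lc * eta by rewrite ler_wpM2l ?ltW.
have f3 : Lc * `|w - sm f K' b| <= Lc * eta by rewrite ler_wpM2l ?ltW.
have f4 : `|c| * `|G j w - G j (sm f K' b)| <= `|c| * (Lc * eta).
  by rewrite ler_wpM2l // (le_trans e3 f3).
have meq : m * eta = eps by rewrite /eta mulrC divfK // gt_eqF.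
have : Lc * (eta + `|c| * eta) + Lc * eta + `|c| * (Lc * eta) = m * eta.
  by rewrite /m; ring.
rewrite meq => h.
have g1 := le_trans e1 f1; have g2 := le_trans e2 f2.
lra.
Qed.

Lemma s_split N K : (N <= K)%N ->
  \sum_(i < K) `|f i - e i| = \sum_(i < N) `|f i - e i| + \sum_(N <= i < K) `|f i - e i|.
Proof.
move=> hNK; have := @big_cat_nat R 0 +%R N 0 K xpredT (fun i => `|f i - e i|) (leq0n N) hNK.
by rewrite !big_mkord.
Qed.

Lemma tail_small tau Nmin : 0 < tau -> exists N, (Nmin <= N)%N /\
  forall K, (N <= K)%N -> \sum_(N <= i < K) `|f i - e i| <= tau.
Proof.
move=> tau0.
set E := range (fun K => \sum_(i < K) `|f i - e i|).
have hE : has_sup E.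
  split; first by exists (\sum_(i < 0) `|f i - e i|); exists 0%N.
  by exists dl => r [K _ <-].
have [r [N0 _ <-] hr] := sup_adherent tau0 hE.
exists (maxn N0 Nmin); split; first by rewrite leq_maxr.
move=> K hK.
have hK0 : (N0 <= maxn N0 Nmin)%N by rewrite leq_maxl.
have h1 := s_split hK.
have h2 := s_split hK0.
have h3 : \sum_(i < K) `|f i - e i| <= sup E.
  by apply: ub_le_sup; [case: hE|exists K].
have h4 : 0 <= \sum_(N0 <= i < maxn N0 Nmin) `|f i - e i| by apply: sumr_ge0.
lra.
Qed.

Lemma fin_span_cons (s : seq V) w z t : fin_span s (z + (- t) *: w) -> fin_span (w :: s) z.
Proof.
move=> [c hc]; exists (fun i => if i is k.+1 then c k else t).
rewrite /= big_ord_recl /=.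
under eq_bigr do rewrite add0n.
by rewrite -hc scaleNr addrC subrK.
Qed.

Lemma fin_span_nil0 : fin_span (nil : seq V) 0.
Proof. by exists (fun=> 0); rewrite big_ord0. Qed.

Context (Z : set V) (hZ0 : Z 0) (hZD : forall x y, Z x -> Z y -> Z (x + y))
  (hZZ : forall (a : R) x, Z x -> Z (a *: x)) (hZS : Z `<=` closed_span f)
  (hZinf : infinite_dimensional Z).

Definition ZN N := [set z | Z z /\ forall j, (j < N)%N -> G j z = 0].

Lemma ZN_inf N : infinite_dimensional (ZN N).
Proof.
elim: N => [|N IH] s hsub.
  by apply: (hZinf (s := s)) => z hz; apply: hsub; split.
have [[w [[hw hwN] hGw]]|hno] := EM (exists w, ZN N w /\ G N w != 0).
  apply: (IH (w :: s)) => z [hz hzN].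
  set t := G N z / G N w.
  apply: (fin_span_cons (t := t)); apply: hsub; split.
    by apply: hZD => //; apply: hZZ.
  move=> j; rewrite ltnS leq_eqVlt => /orP[/eqP->|hj].
 by rewrite (Glin _ _ (hZS hz) (hZS hw)) /t; field.
  by rewrite (Glin _ _ (hZS hz) (hZS hw)) hzN // hwN // mulr0 addr0.
apply: (IH s) => z [hz hzN]; apply: hsub; split => // j.
rewrite ltnS leq_eqVlt => /orP[/eqP->|hj]; last exact: hzN.
apply/eqP; apply: contrapT => hne; apply: hno; exists z; split => //.
exact/negP.
Qed.

Lemma exists_unit N : exists z, Z z /\ `|z| = 1 /\ forall j, (j < N)%N -> G j z = 0.
Proof.
have : ~ (ZN N `<=` fin_span [::]) by apply: ZN_inf.
move=> /existsNP [z /not_implyP [[hz hzN] hnot]].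
have z0 : z != 0 by apply/eqP => hz0; apply: hnot; rewrite hz0; exact: fin_span_nil0.
exists (`|z|^-1 *: z); split; first exact: hZZ.
split; first by rewrite normrZV // unitfE normr_eq0.
move=> j hj.
have := Glin j (`|z|^-1) (sm_cl (K := 0) (a := fun=> 0)) (hZS hz).
have e0 : sm f 0 (fun=> 0) = 0 by rewrite /sm big_ord0.
by rewrite e0 add0r hzN // mulr0 addr0 -e0 Gsm.
Qed.

Definition Cst := 1 + 2 * Lc.

Lemma hump Nmin k : exists N K z (a : nat -> R), [/\ (Nmin <= N)%N, (N <= K)%N, Z z,
  `|z| = 1 & `|z - sm e K (fun i => if (N <= i)%N then a i else 0)| <= Cst * k.+1%:R^-1].
Proof.
set tau := k.+1%:R^-1 : R.
have tau0 : 0 < tau by rewrite invr_gt0.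
have tau1 : tau <= 1 by rewrite invf_le1 // ler1n.
have [N [hN htail]] := tail_small Nmin tau0.
set eps := tau / N.+1%:R.
have eps0 : 0 < eps by rewrite divr_gt0.
have epsN : eps * N.+1%:R = tau by rewrite /eps divfK.
have hL := Lc_gt0.
set eta := eps / (1 + Lc).
have eta0 : 0 < eta by rewrite divr_gt0 // addr_gt0.
have etaL : eta * (1 + Lc) = eps by rewrite /eta divfK // gt_eqF // addr_gt0.
have [z [hz [hz1 hzN]]] := exists_unit N.
have [K0 [a0 ha0]] := clP (hZS hz) eta0.
set K := maxn K0 N; set a := cf K0 a0.
have hK0 : (K0 <= K)%N by rewrite leq_maxl.
have hNK : (N <= K)%N by rewrite leq_maxr.
set x := sm f K0 a0.
have hx : x = sm f K a by rewrite /x /a (sm_pad _ _ hK0).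
exists N, K, z, a; split => //.
have Nn : 0 <= N%:R :> R by [].
have epsN' : eps * N%:R + eps = tau by rewrite -epsN mulrSr mulrDr mulr1.
have hsmall j : (j < N)%N -> `|a j| <= eps.
  move=> hj; rewrite /a -Gsm -/x -(subr0 (G j x)) -(hzN j hj).
  apply: le_trans (Glip j x z) _; rewrite distrC.
  have : Lc * `|z - x| <= Lc * eta by rewrite ler_wpM2l ?ltW.
  have : Lc * eta <= eps by rewrite -etaL; nra.
  lra.
have hxn : `|x| <= 2.
  have := ler_normB z (z - x); rewrite opprB addrCA subrr addr0 hz1 => h.
  have : eta <= 1.
    have : 0 <= eps * N%:R by rewrite mulr_ge0 // ltW.
    have : 0 <= eta * Lc by rewrite mulr_ge0 // ltW.
    have : eta * (1 + Lc) = eta + eta * Lc by ring.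
    lra.
  lra.
have hbig i : `|a i| <= 2 * Lc.
  apply: le_trans (MI K0 a0 i) _; rewrite mulrC ler_wpM2r // ltW //.
set g := sm e K (fun i => if (N <= i)%N then a i else 0).
have hxg : x - g = \sum_(0 <= i < K) (a i *: f i - (if (N <= i)%N then a i else 0) *: e i).
  by rewrite hx /g /sm -sumrB big_mkord.
have hsplit := @big_cat_nat V 0 +%R N 0 K xpredT
  (fun i => a i *: f i - (if (N <= i)%N then a i else 0) *: e i) (leq0n N) hNK.
have b1 : `|\sum_(0 <= i < N) (a i *: f i - (if (N <= i)%N then a i else 0) *: e i)|
    <= eps * N%:R.
  apply: le_trans (ler_norm_sum _ _ _) _.
  apply: (@le_trans _ _ (\sum_(0 <= i < N) eps)); last by rewrite sumr_const_nat subn0 mulr_natr.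
  apply: ler_sum_nat => i /andP[_ hi].
  by rewrite leqNgt hi scale0r subr0 normrZ Hf mulr1 hsmall.
have b2 : `|\sum_(N <= i < K) (a i *: f i - (if (N <= i)%N then a i else 0) *: e i)|
    <= 2 * Lc * tau.
  apply: le_trans (ler_norm_sum _ _ _) _.
  apply: (@le_trans _ _ (\sum_(N <= i < K) (2 * Lc) * `|f i - e i|)).
    apply: ler_sum_nat => i /andP[hi _].
    by rewrite hi -scalerBr normrZ ler_wpM2r.
  by rewrite -mulr_sumr ler_wpM2l ?htail // mulr_ge0 // ltW.
have hzg : `|z - g| <= `|z - x| + `|x - g|.
  by have := ler_normD (z - x) (x - g); rewrite addrA subrK.
rewrite hxg hsplit in hzg.
have b3 := ler_normD (\sum_(0 <= i < N) (a i *: f i - (if (N <= i)%N then a i else 0) *: e i))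
  (\sum_(N <= i < K) (a i *: f i - (if (N <= i)%N then a i else 0) *: e i)).
have : 0 <= eta * Lc by rewrite mulr_ge0 // ltW.
have : eta * (1 + Lc) = eta + eta * Lc by ring.
rewrite /Cst -/tau.
have : (1 + 2 * Lc) * tau = tau + 2 * Lc * tau by ring.
lra.
Qed.

Lemma not_dispersed : ~ dispersed L Z.
Proof.
move=> hd; apply: hd.
have hex : forall p : nat * nat, exists y : nat * nat * V * (nat -> R),
  [/\ (p.1 <= y.1.1.1)%N, (y.1.1.1 <= y.1.1.2)%N, Z y.1.2, `|y.1.2| = 1 &
   `|y.1.2 - sm e y.1.1.2 (fun i => if (y.1.1.1 <= i)%N then y.2 i else 0)|
     <= Cst * p.2.+1%:R^-1].
  by move=> [Nmin k]; have [N [K [z [a H]]]] := hump Nmin k; exists (N, K, z, a).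
have [F hF] := choice hex.
pose B := fix B k := if k is k'.+1 then (F (B k', k')).1.1.2 else 0%N.
pose Nk k := (F (B k, k)).1.1.1.
pose Kk k := (F (B k, k)).1.1.2.
pose zk k := (F (B k, k)).1.2.
pose ak k := (F (B k, k)).2.
pose gk k := sm e (Kk k) (fun i => if (Nk k <= i)%N then ak k i else 0).
have hP k : [/\ (B k <= Nk k)%N, (Nk k <= Kk k)%N, Z (zk k), `|zk k| = 1 &
   `|zk k - gk k| <= Cst * k.+1%:R^-1] by exact: (hF (B k, k)).
have hBS k : B k.+1 = Kk k by [].
have hBm k m : (k < m)%N -> (Kk k <= B m)%N.
  elim: m => // m IH; rewrite ltnS leq_eqVlt => /orP[/eqP->|hkm]; first by rewrite hBS.
  have [h1 h2 _ _ _] := hP m.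
  by rewrite hBS (leq_trans (IH hkm)) // (leq_trans h1).
have hdis n m : (n < m)%N -> bl_disjoint L (gk n) (gk m).
  move=> hnm; set M := maxn (Kk n) (Kk m).
  have h1 : (Kk n <= M)%N by rewrite leq_maxl.
  have h2 : (Kk m <= M)%N by rewrite leq_maxr.
  rewrite /gk (sm_pad _ _ h1) (sm_pad _ _ h2).
  apply: disj_combo => // i; rewrite /cf.
  case: ifP => hi; last by left.
  right; case: ifP => // _.
  have [hBN _ _ _ _] := hP m.
  have : (i < Nk m)%N by apply: leq_trans hi (leq_trans (hBm _ _ hnm) hBN).
  by rewrite ltnNge => /negbTE ->.
exists zk; split; first by move=> n; have [_ _ ? ? _] := hP n.
exists gk; split.
  move=> n m hnm; have [h|h|h] := ltngtP n m.
  - exact: hdis.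
  - by rewrite /bl_disjoint mtC; exact: hdis.
  - by move: hnm; rewrite h.
apply/cvgrPdist_le => eps e0.
set N0 := Num.Def.trunc (Cst / eps).
have hC : 0 < Cst by rewrite /Cst; have := Lc_gt0; lra.
near=> n.
rewrite sub0r normrN normr_id distrC.
have [_ _ _ _ h] := hP n.
apply: le_trans h _.
rewrite ler_pdivrMr // mulrC -ler_pdivrMr //.
apply: ltW; apply: lt_le_trans (truncnS_gt _) _.
rewrite ler_nat ltnS.
near: n; by exists N0.
Unshelve. all: by end_near.
Qed.

End Main.


Lemma closed_span_sub (R : realType) (V : completeNormedModType R) (f : nat -> V) :
  closed_subspace (closed_span f).
Proof.
have e0 : sm f 0 (fun=> 0) = 0 by rewrite /sm big_ord0.
split; first by rewrite -e0; exact: sm_cl.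
split.
  move=> z w hz hw; apply: clI => eps eps0.
  have e2 : 0 < eps / 2 by rewrite divr_gt0.
  have [K [a ha]] := clP hz e2; have [K' [b hb]] := clP hw e2.
  set M := maxn K K'.
  have h1 : (K <= M)%N by rewrite leq_maxl.
  have h2 : (K' <= M)%N by rewrite leq_maxr.
  exists M, (fun i => cf K a i + 1 * cf K' b i).
  rewrite smD scale1r -!sm_pad //.
  have -> : z + w - (sm f K a + sm f K' b) = (z - sm f K a) + (w - sm f K' b).
    by rewrite opprD addrACA.
  apply: le_lt_trans (ler_normD _ _) _; lra.
split; last exact: closed_closure.
move=> c z hz; apply: clI => eps eps0.
have hc : 0 < `|c| + 1 by rewrite ltr_pwDr.
have e2 : 0 < eps / (`|c| + 1) by rewrite divr_gt0.
have [K [a ha]] := clP hz e2.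
exists K, (fun i => c * a i).
have -> : c *: z - sm f K (fun i => c * a i) = c *: (z - sm f K a).
  by rewrite scalerBr /sm scaler_sumr; congr (_ - _); apply: eq_bigr => i _; rewrite scalerA.
rewrite normrZ.
have h1 : `|c| * `|z - sm f K a| <= `|c| * (eps / (`|c| + 1)).
  by rewrite ler_wpM2l // ltW.
have h2 : `|c| * (eps / (`|c| + 1)) < eps.
  have hq : eps / (`|c| + 1) * (`|c| + 1) = eps by rewrite divfK // gt_eqF.
  have : eps / (`|c| + 1) * (`|c| + 1) = eps / (`|c| + 1) * `|c| + eps / (`|c| + 1) by ring.
  lra.
exact: le_lt_trans h1 h2.
Qed.

Theorem proposition4p12 (R : realType) (V : completeNormedModType R)
  (L : BanachLattice R V) (f : nat -> V) :
  quasi_disjoint L f -> anti_dispersed L (closed_span f).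
Proof.
move=> [Hf [e [He1 [He Hsum]]]].
split; first exact: closed_span_sub.
move=> [Z [hZS [hZ0 [hZD [hZZ _]]] hZinf hZd]].
set S := (\sum_(n <oo) (`|f n - e n|)%:E)%E in Hsum.
have hpart K : ((\sum_(i < K) `|f i - e i|)%:E <= S)%E.
  rewrite -sumEFin -(big_mkord xpredT (fun i => (`|f i - e i|)%:E)).
  by apply: nneseries_lim_ge => n _ _; rewrite lee_fin.
have S0 : (0 <= S)%E by have := hpart 0%N; rewrite big_ord0.
have Sfin : S \is a fin_num.
  by rewrite ge0_fin_numE // (lt_trans Hsum) // ltey.
have hdl : fine S < 1 by rewrite -lte_fin fineK.
have hs K : \sum_(i < K) `|f i - e i| <= fine S by rewrite -lee_fin fineK.
exact: (not_dispersed Hf He1 He hdl hs hZD hZZ hZS hZinf hZd).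
Qed.
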